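(* Let $n$ be primover to base $2$. Then $2^n-1$ is primover to base $2$ if and only if $n$ is prime.
   Context: For an integer $a>1$ and an odd integer $n>1$ with $\gcd(a,n)=1$: $h_a(n)$ denotes the multiplicative order of $a$ modulo $n$. A cyclotomic coset of $a$ modulo $n$ is a set of the form $\{\, s a^j \bmod n : j\ge 0\,\}$ with $s\in\{1,\dots,n-1\}$; these cosets partition $\{1,\dots,n-1\}$, and $r_a(n)$ denotes the number of distinct cyclotomic cosets of $a$ modulo $n$. An odd composite number $n$ coprime to $a$ is called an overpseudoprime to base $a$ if $n=r_a(n)\,h_a(n)+1$. An integer $N>1$ is called primover to base $a$ if it is either prime or an overpseudoprime to base $a$. *)

(* Defs.v *)
From mathcomp Require Import all_boot.
Set Implicit Arguments. Unset Strict Implicit. Unset Printing Implicit Defensive.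

(* Multiplicative order of a modulo n: the least k >= 1 with a^k = 1 (mod n).
   For gcd(a,n)=1 and n>1 such k exists and k <= totient n < n, so a search
   over 1..n is exhaustive. (If none exists the value is n+1, irrelevant.) *)
Definition ordmod (a n : nat) : nat :=
  (find (fun k => a ^ k.+1 %% n == 1 %% n) (iota 0 n)).+1.

(* The cyclotomic coset {s a^j mod n : j >= 0}, as a set of residues 'I_n.
   Since a^j mod n is periodic with period ordmod a n < n, j < n suffices. *)
Definition cyccoset (a n s : nat) : {set 'I_n} :=
  [set x : 'I_n | [exists j : 'I_n, nat_of_ord x == (s * a ^ j) %% n]].

Definition ncosets (a n : nat) : nat :=
  #|[set cyccoset a n (nat_of_ord s) | s : 'I_n & 0 < nat_of_ord s]|.

Definition overpseudoprime (a n : nat) : Prop :=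
  [/\ odd n, 1 < n, ~~ prime n, coprime a n & n = ncosets a n * ordmod a n + 1].

Definition primover (a N : nat) : Prop :=
  1 < N /\ (prime N \/ overpseudoprime a N).

(* Main.v *)
Require Import Defs.
From mathcomp Require Import all_boot.
Set Implicit Arguments. Unset Strict Implicit. Unset Printing Implicit Defensive.

Section Q.
Variables (M t : nat).
Definition Q k := t * 2 ^ k = t %[mod M].

Lemma Qmul a q : Q a -> Q (a * q).
Proof.
rewrite /Q => H; elim: q => [|q IH]; first by rewrite muln0 expn0 muln1.
by rewrite mulnS expnD mulnA -modnMml H modnMml.
Qed.

Lemma Qsub a b : Q a -> Q (a + b) -> Q b.
Proof.
rewrite /Q expnD mulnA => Ha Hab.
by rewrite -Hab -modnMml -Ha modnMml.
Qed.

Lemma Qgcd a b : 0 < a -> Q a -> Q b -> Q (gcdn a b).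
Proof.
move=> a0 Ha Hb; case: (egcdnP b a0) => km kn E _.
apply: (@Qsub (kn * b)); first by rewrite mulnC; apply: Qmul.
by rewrite -E mulnC; apply: Qmul.
Qed.

Lemma Q1 : Q 1 -> t = 0 %[mod M].
Proof.
rewrite /Q expn1 muln2 -addnn => H; apply/eqP; by rewrite -(eqn_modDl t) addn0 H.
Qed.

Lemma Qper p j : Q p -> t * 2 ^ j = t * 2 ^ (j %% p) %[mod M].
Proof.
move=> H; rewrite {1}(divn_eq j p) expnD mulnA [j %/ p * p]mulnC -modnMml.
by rewrite (Qmul (j %/ p) H) modnMml.
Qed.
End Q.

Lemma exp2_gt1 k : 0 < k -> 1 < 2 ^ k.
Proof. by move=> k0; have := ltn_exp2l 0 k (isT : 1 < 2); rewrite expn0 => ->. Qed.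

Section Cyc.
Variable N : nat.
Hypothesis N1 : 1 < N.
Local Notation M := (2 ^ N - 1).

Lemma MS : 2 ^ N = M + 1.
Proof. by rewrite subnK // expn_gt0. Qed.

Lemma NleM : N <= M.
Proof. by rewrite leq_subRL ?expn_gt0 // add1n ltn_expl. Qed.

Lemma M1 : 1 < M.
Proof. by apply: leq_trans N1 NleM. Qed.

Lemma M0 : 0 < M.
Proof. exact: ltnW M1. Qed.

Lemma oddMers : odd M.
Proof.
have: odd (M + 1) = false by rewrite -MS; case: N N1 => // k _; rewrite expnS oddM.
by rewrite addn1 /= => /negbFE.
Qed.

Lemma twoN : 2 ^ N = 1 %[mod M].
Proof. by rewrite {1}MS addnC modnDr. Qed.

Lemma QN s : Q M s N.
Proof. by rewrite /Q -modnMmr twoN modnMmr muln1. Qed.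

Lemma small_pow k : 0 < k < N -> 2 ^ k %% M != 1 %% M.
Proof.
case/andP=> k0 kN.
have lt: 2 ^ k < M.
  apply: (@leq_trans (2 ^ N.-1).+1).
    by rewrite ltnS leq_exp2l // -ltnS prednK // ltnW.
  rewrite -(leq_add2r 1) -MS addn1 -{2}(prednK (ltnW N1)) expnS mul2n -addnn.
  have hN : 0 < N.-1 by rewrite -subn1 subn_gt0.
  by rewrite -(add1n (2 ^ N.-1)) ltn_add2r exp2_gt1.
rewrite !modn_small //; last exact: M1.
by rewrite neq_ltn exp2_gt1 // orbT.
Qed.

Lemma ordmodM : ordmod 2 M = N.
Proof.
rewrite /ordmod; set a := (fun k => _).
have Npos : 0 < N := ltnW N1.
have hN1 : N.-1 < M by apply: leq_trans NleM; rewrite prednK.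
have aN : a N.-1 by rewrite /a prednK //; apply/eqP; apply: twoN.
have hasa : has a (iota 0 M).
  apply/hasP; exists N.-1; last exact: aN.
  rewrite mem_iota add0n. exact: hN1.
have := nth_find 0 hasa; set i := find a _.
have iM : i < M by rewrite -(size_iota 0 M) -has_find.
rewrite nth_iota // add0n => ai.
have hi : N <= i.+1.
  rewrite leqNgt; apply/negP => iN.
  move: ai; rewrite /a => /eqP ai.
  have := small_pow (k := i.+1). by rewrite iN ai eqxx => /(_ isT).
have hi2 : i.+1 <= N.
  rewrite leqNgt; apply/negP => Ni.
  have := @before_find _ 0 a (iota 0 M) N.-1; rewrite -/i.
  rewrite nth_iota // add0n aN => H.
  have : N.-1 < i by rewrite -ltnS prednK.
  by move/H.
by apply/eqP; rewrite eqn_leq hi hi2.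
Qed.
End Cyc.

Section Cos.
Variable N : nat.
Hypothesis N1 : 1 < N.
Local Notation M := (2 ^ N - 1).
Local Notation C s := (cyccoset 2 M s).

Lemma Npos : 0 < N. Proof. exact: ltnW N1. Qed.

Lemma memC s (x : 'I_M) : reflect (exists j, val x = s * 2 ^ j %% M) (x \in C s).
Proof.
rewrite inE; apply: (iffP existsP) => [[j /eqP h] | [j h]]; first by exists j.
exists (Ordinal (leq_trans (ltn_pmod j Npos) (NleM N))); apply/eqP; rewrite h /=.
exact: (Qper _ (QN N s)).
Qed.

Lemma selfC (s : 'I_M) : s \in C s.
Proof. by apply/memC; exists 0; rewrite expn0 muln1 modn_small. Qed.

Lemma transC s (x y : 'I_M) : x \in C s -> y \in C x -> y \in C s.
Proof.
move=> /memC [j hj] /memC [i hi]; apply/memC; exists (j + i).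
by rewrite hi hj modnMml expnD mulnA.
Qed.

Lemma symC (s x : 'I_M) : x \in C s -> s \in C x.
Proof.
move=> /memC [j hj]; apply/memC; exists (j * N.-1).
rewrite hj modnMml.
have -> : s * 2 ^ j * 2 ^ (j * N.-1) = s * 2 ^ (N * j).
  rewrite -mulnA -expnD; congr (_ * 2 ^ _).
  by rewrite -{1}(muln1 j) -mulnDr add1n prednK ?Npos // mulnC.
by rewrite (Qmul (M:=M) (t:=s) j (QN N s)) modn_small.
Qed.

Lemma eqC (x y : 'I_M) : (y \in C x) = (C y == C x).
Proof.
apply/idP/eqP => [h|<-]; last exact: selfC.
apply/setP => z; apply/idP/idP => hz; first exact: transC h hz.
exact: transC (symC h) hz.
Qed.

Lemma nzC s j : 0 < s < M -> s * 2 ^ j %% M != 0.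
Proof.
case/andP => s0 sM; apply/negP => /eqP h.
have : M %| s * 2 ^ j by rewrite /dvdn h.
rewrite Gauss_dvdl; last by apply: coprimeXr; rewrite coprimen2 (oddMers N1).
by move/(dvdn_leq s0); rewrite leqNgt sM.
Qed.

Lemma CS (s : 'I_M) (x : 'I_M) : 0 < s -> x \in C s -> 0 < x.
Proof.
move=> s0 /memC [j ->]; rewrite lt0n; apply: nzC; by rewrite s0 ltn_ord.
Qed.

Definition fC (s p : nat) (j : 'I_p) : 'I_M := Ordinal (ltn_pmod (s * 2 ^ j) (M0 N1)).

Lemma C_sub (s : 'I_M) p (p0 : 0 < p) : Q M s p -> C s \subset (@fC s p) @: setT.
Proof.
move=> Hp; apply/subsetP => x /memC [j hj]; apply/imsetP.
exists (Ordinal (ltn_pmod j p0)); first by rewrite inE.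
by apply: val_inj; rewrite /= hj; apply: Qper.
Qed.

Lemma Cle (s : 'I_M) p : 0 < p -> Q M s p -> #|C s| <= p.
Proof.
move=> p0 Hp; apply: leq_trans (subset_leq_card (C_sub p0 Hp)) _.
by apply: leq_trans (leq_imset_card _ _) _; rewrite cardsT card_ord.
Qed.

Lemma CleN (s : 'I_M) : #|C s| <= N.
Proof. exact: Cle Npos (QN N s). Qed.

Lemma Ceq (s : 'I_M) : prime N -> 0 < s -> #|C s| = N.
Proof.
move=> pN s0.
have -> : C s = (@fC s N) @: setT.
  apply/eqP; rewrite eqEsubset (C_sub Npos (QN N s)) /=.
  apply/subsetP => x /imsetP [j _ ->]; apply/memC; by exists j.
rewrite card_imset; last first.
have key : forall i j : 'I_N, i < j -> s * 2 ^ i %% M = s * 2 ^ j %% M -> False.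
  move=> i j ij h.
  have ji : 0 < j - i by rewrite subn_gt0.
  have Qji : Q M (s * 2 ^ i) (j - i).
    rewrite /Q -mulnA -expnD subnKC; last exact: ltnW.
    by rewrite h.
  have QNN := QN N (s * 2 ^ i).
  have := Qgcd ji Qji QNN.
  have -> : gcdn (j - i) N = 1.
    apply/eqP; rewrite gcdnC -/(coprime N (j - i)) prime_coprime //.
    rewrite gtnNdvd //.
    by apply: leq_ltn_trans (leq_subr _ _) (ltn_ord j).
  move/Q1; rewrite mod0n => /eqP; apply/negP; apply: nzC.
  by rewrite s0 ltn_ord.
  move=> i j /(congr1 val) /= h; apply/eqP; case: (ltngtP i j) => // ij.
  - by case: (key _ _ ij h).
  - by case: (key _ _ ij (esym h)).
  by rewrite -val_eqE /= ij.
by rewrite cardsT card_ord.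
Qed.
End Cos.

Section Part.
Variable N : nat.
Hypothesis N1 : 1 < N.
Local Notation M := (2 ^ N - 1).
Local Notation C s := (cyccoset 2 M s).
Local Notation S := [set s : 'I_M | 0 < s].

Lemma ncosetsE : ncosets 2 M = #|(fun s : 'I_M => C s) @: S|.
Proof. by []. Qed.

Lemma partC : partition ((fun s : 'I_M => C s) @: S) S.
Proof.
have <- : preim_partition (fun s : 'I_M => C s) S = (fun s : 'I_M => C s) @: S.
  apply: eq_in_imset => x; rewrite inE => x0; apply/setP => y.
  rewrite [LHS]inE eq_sym -(eqC N1); apply/andP/idP => [[]//|h]; split=> //.
  rewrite inE; apply: (CS N1 x0 h).
exact: preim_partitionP.
Qed.

Lemma cardS : #|S| = M.-1.
Proof.
have -> : S = [set~ Ordinal (M0 N1)] by apply/setP => x; rewrite !inE -val_eqE lt0n.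
by rewrite cardsC1 card_ord.
Qed.

Lemma sumC : M.-1 = \sum_(A in (fun s : 'I_M => C s) @: S) #|A|.
Proof. by rewrite -cardS; apply: card_partition; apply: partC. Qed.
End Part.

Lemma comp_div N : 1 < N -> ~~ prime N -> exists a, [/\ 1 < a, a < N & a %| N].
Proof.
move=> N1 npN; have pa := pdiv_prime N1; exists (pdiv N); split.
- exact: prime_gt1.
- rewrite ltn_neqAle dvdn_leq ?pdiv_dvd ?andbT ?(ltnW N1) //.
  by apply/negP => /eqP e; move: pa; rewrite e (negbTE npN).
- exact: pdiv_dvd.
Qed.

Lemma dvd_M a N : a %| N -> 2 ^ a - 1 %| 2 ^ N - 1.
Proof.
move=> aN; rewrite -eqn_mod_dvd ?expn_gt0 //.
rewrite -(divnK aN) mulnC expnM -modnXm.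
have -> : 2 ^ a %% (2 ^ a - 1) = 1 %% (2 ^ a - 1).
  by rewrite -{1}(subnK (expn_gt0 2 a)) addnC modnDr.
by rewrite modnXm exp1n.
Qed.

Section Main.
Variable N : nat.
Hypothesis N1 : 1 < N.
Local Notation M := (2 ^ N - 1).
Local Notation C s := (cyccoset 2 M s).
Local Notation S := [set s : 'I_M | 0 < s].
Local Notation P := ((fun s : 'I_M => C s) @: S).

Lemma prime_case : prime N -> M = ncosets 2 M * ordmod 2 M + 1.
Proof.
move=> pN; rewrite ordmodM // ncosetsE.
have : M.-1 = #|P| * N.
  rewrite (sumC N1) -sum_nat_const; apply: eq_bigr => A /imsetP [s].
  rewrite inE => s0 ->; apply: (Ceq N1 pN s0).
by move=> <-; rewrite addn1 prednK // (M0 N1).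
Qed.

Lemma comp_case : ~~ prime N -> ~~ prime M /\ M <> ncosets 2 M * ordmod 2 M + 1.
Proof.
move=> npN; have [a [a1 aN adN]] := comp_div N1 npN.
set d := 2 ^ a - 1.
have dM : d %| M by apply: dvd_M.
have d1 : 1 < d.
  rewrite /d ltn_subRL addn1; have := ltn_exp2l 1 a (isT : 1 < 2).
  by rewrite expn1 => ->.
have dltM : d < M.
  rewrite /d ltn_sub2r //; first by rewrite exp2_gt1 // ltnW.
  by rewrite ltn_exp2l.
split.
  apply/negP => pM; have := prime_nt_dvdP pM (d := d).
  rewrite neq_ltn d1 orbT => /(_ isT) /(_ dM) e.
  by move: dltM; rewrite e ltnn.
have s0M : M %/ d < M by apply: ltn_Pdiv d1 (M0 N1).
pose s0 : 'I_M := Ordinal s0M.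
have s0pos : 0 < s0 by rewrite /= divn_gt0 ?(ltnW d1) // dvdn_leq ?(M0 N1).
have Qs0 : Q M s0 a.
  rewrite /Q /= -(subnK (expn_gt0 2 a)) -/d mulnDr muln1 divnK //.
  by rewrite modnDl.
have Cs0 : #|C s0| < N.
  apply: leq_ltn_trans aN; apply: (Cle N1 (ltnW a1) Qs0).
rewrite ordmodM // ncosetsE => eqM.
have e1 : M.-1 = #|P| * N by rewrite {1}eqM addn1.
have h1 : \sum_(A in P) N = \sum_(A in P) #|A| + \sum_(A in P) (N - #|A|).
  rewrite -big_split; apply: eq_bigr => A /imsetP [s _ ->].
  by rewrite /= subnKC // (CleN N1).
have h2 : 0 < \sum_(A in P) (N - #|A|).
  rewrite (bigD1 (C s0)) /=; last by apply/imsetP; exists s0; rewrite ?inE.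
  by rewrite addn_gt0 subn_gt0 Cs0.
move: h1; rewrite sum_nat_const -(sumC N1) -e1 => h1.
by move: h2; rewrite -(ltn_add2l M.-1) -h1 addn0 ltnn.
Qed.
End Main.

Unset Implicit Arguments.

Theorem theorem3 (n : nat) :
  primover 2 n -> (primover 2 (2 ^ n - 1) <-> prime n).
Proof.
move=> [n1 _]; split.
- move=> [_ H]; apply/negPn/negP => npn; have [h1 h2] := comp_case n1 npn.
  case: H => [pM | [_ _ _ _ e]]; first by rewrite pM in h1.
  exact: h2 e.
- move=> pn; split; first exact: M1 n1.
  case: (boolP (prime (2 ^ n - 1))) => pM; [by left | right].
  split; [exact: oddMers n1 | exact: M1 n1 | exact: pM | | exact: prime_case n1 pn].
  by rewrite coprime2n (oddMers n1).
Qed.
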